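(* Let $p$ be an odd prime and $G=\langle a,b : (a[a^p,b])^p,\ b^p\rangle$. Then $a^p\neq 1$ in $G$; consequently the epimorphism $G\to C_p*C_p=\langle\alpha,\beta:\alpha^p,\beta^p\rangle$, $a\mapsto\alpha$, $b\mapsto\beta$, has nontrivial kernel, and $G$ is not residually nilpotent.
   Context: Commutator convention: $[x,y]=x^{-1}y^{-1}xy$. A group $G$ is residually nilpotent if $\bigcap_k\gamma_k(G)=\{1\}$, where $\gamma_1(G)=G$, $\gamma_k(G)=[G,\gamma_{k-1}(G)]$. *)

(* Defs.v *)
From Stdlib Require Import List.
From mathcomp Require Import all_boot.
Set Implicit Arguments. Unset Strict Implicit.

Record group := Group {
  carrier :> Type;
  gmul : carrier -> carrier -> carrier;
  gone : carrier;
  ginv : carrier -> carrier;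
  gmulA : forall x y z, gmul x (gmul y z) = gmul (gmul x y) z;
  gmul1 : forall x, gmul gone x = x;
  gmulV : forall x, gmul (ginv x) x = gone
}.

Section Ops.
Variable G : group.
Fixpoint gpow (x : G) (n : nat) : G :=
  match n with 0 => gone G | S k => gmul x (gpow x k) end.
Definition gcomm (x y : G) : G :=
  gmul (gmul (gmul (ginv x) (ginv y)) x) y.

Inductive gen (S : G -> Prop) : G -> Prop :=
| gen_in x : S x -> gen S x
| gen_one : gen S (gone G)
| gen_mul x y : gen S x -> gen S y -> gen S (gmul x y)
| gen_inv x : gen S x -> gen S (ginv x).

(* lower central series: gamma 1 = G, gamma (k+1) = [G, gamma k];
   we set gamma 0 = G as well (harmless) *)
Fixpoint gamma (k : nat) : G -> Prop :=
  match k with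
  | 0 | 1 => fun _ => True
  | S k' => gen (fun z => exists x y, gamma k' y /\ z = gcomm x y)
  end.

Definition residually_nilpotent : Prop :=
  forall g : G, (forall k, 1 <= k -> gamma k g) -> g = gone G.
End Ops.

Definition is_hom (G H : group) (f : G -> H) : Prop :=
  forall x y, f (gmul x y) = gmul (f x) (f y).

(* A two-generator relator: a word in two letters, evaluated uniformly
   in every group. *)
Definition relator2 := forall H : group, H -> H -> H.

Definition presents2 (G : group) (a b : G) (rels : list relator2) : Prop :=
  (forall r, List.In r rels -> r G a b = gone G) /\
  (forall (H : group) (x y : H),
      (forall r, List.In r rels -> r H x y = gone H) ->
      exists f : G -> H, is_hom f /\ f a = x /\ f b = y /\
        forall g : G -> H, is_hom g -> g a = x -> g b = y -> forall z, g z = f z).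

Definition rel_G1 (p : nat) : relator2 :=
  fun H a b => gpow (gmul a (gcomm (gpow a p) b)) p.
Definition rel_b (p : nat) : relator2 := fun H a b => gpow b p.
Definition rel_a (p : nat) : relator2 := fun H a b => gpow a p.

(* Main.v *)
Require Import Defs.
From mathcomp Require Import all_boot.

Lemma mulKV {G : group} (x y : G) : gmul (ginv x) (gmul x y) = y.
Proof. by rewrite gmulA gmulV gmul1. Qed.

Lemma mulrV {G : group} (x : G) : gmul x (ginv x) = gone G.
Proof.
have e : gmul (ginv (ginv x)) (gmul (ginv x) (gmul x (ginv x))) = gmul x (ginv x).
  by rewrite mulKV.
by rewrite -e (gmulA (ginv x)) gmulV gmul1 gmulV.
Qed.

Lemma mulr1 {G : group} (x : G) : gmul x (gone G) = x.
Proof. by rewrite -(gmulV x) gmulA mulrV gmul1. Qed.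

Lemma mulVK {G : group} (x y : G) : gmul x (gmul (ginv x) y) = y.
Proof. by rewrite gmulA mulrV gmul1. Qed.

Lemma inv_uniq {G : group} (x y : G) : gmul x y = gone G -> ginv x = y.
Proof. move=> h. by rewrite -(mulr1 (ginv x)) -h mulKV. Qed.

Lemma invK {G : group} (x : G) : ginv (ginv x) = x.
Proof. apply: inv_uniq. by rewrite gmulV. Qed.

Lemma inv_mul {G : group} (x y : G) : ginv (gmul x y) = gmul (ginv y) (ginv x).
Proof. apply: inv_uniq. by rewrite -gmulA mulVK mulrV. Qed.

Lemma inv1 {G : group} : ginv (gone G) = gone G.
Proof. apply: inv_uniq. by rewrite gmul1. Qed.

Ltac gsimp := repeat (rewrite ?inv_mul ?invK ?inv1 -?gmulA ?mulKV ?mulVK ?gmulV ?mulrV ?gmul1 ?mulr1).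

Definition conj {G : group} (c g : G) := gmul (gmul (ginv g) c) g.

Lemma gamma_mul {G : group} k (x y : G) : gamma k x -> gamma k y -> gamma k (gmul x y).
Proof. case: k => [|[|k]] //=; exact: gen_mul. Qed.
Lemma gamma_inv {G : group} k (x : G) : gamma k x -> gamma k (ginv x).
Proof. case: k => [|[|k]] //=; exact: gen_inv. Qed.
Lemma gamma_one {G : group} k : gamma k (gone G).
Proof. case: k => [|[|k]] //=; exact: gen_one. Qed.

Lemma gamma_conj {G : group} k (c g : G) : gamma k c -> gamma k (conj c g).
Proof.
elim: k c => [|[|k] IH] c //= h.
elim: h => {c} [z [x [y [hy ->]]]| |x y _ hx _ hy|x _ hx].
- apply: gen_in. exists (conj x g), (conj y g). split; first exact: IH.
  rewrite /conj /gcomm; gsimp; done.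
- rewrite /conj; gsimp; exact: gen_one.
- have -> : conj (gmul x y) g = gmul (conj x g) (conj y g) by rewrite /conj; gsimp.
  exact: gen_mul.
- have -> : conj (ginv x) g = ginv (conj x g) by rewrite /conj; gsimp.
  exact: gen_inv.
Qed.

Lemma pow_expand {G : group} k (x u : G) (P : G -> Prop) :
  (forall y z, P y -> P z -> P (gmul y z)) -> P (gone G) ->
  (forall c g, P c -> P (conj c g)) -> P u ->
  exists w, P w /\ gpow (gmul x u) k = gmul (gpow x k) w.
Proof.
move=> Pm P1 Pc Pu; elim: k => [|k [w [Pw e]]] /=.
  by exists (gone G); split => //; rewrite gmul1.
exists (gmul (conj u (gpow x k)) w); split; first by apply: Pm => //; apply: Pc.
rewrite e /conj; gsimp; done.
Qed.

Lemma hom_one {G H : group} (f : G -> H) : is_hom f -> f (gone G) = gone H.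
Proof.
move=> hf; have e : f (gone G) = gmul (f (gone G)) (f (gone G)) by rewrite -hf gmul1.
by rewrite -(mulKV (f (gone G)) (f (gone G))) -e gmulV.
Qed.

Lemma hom_pow {G H : group} (f : G -> H) x n : is_hom f -> f (gpow x n) = gpow (f x) n.
Proof. move=> hf; elim: n => [|n IH] /=; [exact: hom_one | by rewrite hf IH]. Qed.

Lemma gpow_one {G : group} n : gpow (gone G) n = gone G.
Proof. by elim: n => //= n ->; rewrite gmul1. Qed.

Lemma step {G : group} (a b : G) p k :
  gpow (gmul a (gcomm (gpow a p) b)) p = gone G ->
  (1 <= k)%N -> gamma k (gpow a p) -> gamma k.+1 (gpow a p).
Proof.
move=> hrel; case: k => // k _ hk.
set c := gpow a p in hrel hk *.
have uin : gamma k.+2 (gcomm c b).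
  have -> : gcomm c b = ginv (gcomm b c) by rewrite /gcomm; gsimp.
  apply: gen_inv; apply: gen_in; exists b, c; split => //.
have [w [Pw e]] := @pow_expand G p a (gcomm c b) (gamma k.+2)
  (@gamma_mul G k.+2) (gamma_one k.+2) (@gamma_conj G k.+2) uin.
rewrite hrel in e.
have -> : c = ginv w.
  rewrite -(invK c); congr ginv; apply: inv_uniq; by rewrite e.
exact: gamma_inv.
Qed.

Lemma all_gamma {G : group} (a b : G) p :
  gpow (gmul a (gcomm (gpow a p) b)) p = gone G ->
  forall k, (1 <= k)%N -> gamma k (gpow a p).
Proof.
move=> hrel; elim => // k IH k1.
case: k IH k1 => [|k] IH _; first done.
exact: (step a b p k.+1 hrel isT (IH isT)).
Qed.

Module W.
From mathcomp Require Import all_algebra all_fingroup.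
Import GRing.Theory.
Local Open Scope ring_scope.


Definition PG (T : finGroupType) : Defs.group :=
  @Defs.Group T (fun x y => (x * y)%g) 1%g (fun x => x^-1)%g (@mulgA T) (@mul1g T) (@mulVg T).

Lemma gpowE (T : finGroupType) (x : T) n : @gpow (PG T) x n = (x ^+ n)%g.
Proof. by elim: n => //= n ->; rewrite expgS. Qed.

Lemma m_facts (p : nat) : prime p -> odd p ->
  let m := (p ^ p - p.-1 ^ p)%N in
  [/\ (p < m)%N, coprime m p & (p ^ p = m + p.-1 ^ p)%N].
Proof.
move=> pp op m.
have p2 : (2 < p)%N.
  case: p pp op {m} => [|[|[|p]]] //.
have le1 : (p.-1 ^ p <= p ^ p)%N by rewrite leq_exp2r // ?leq_pred // prime_gt0.
have e : (p ^ p = m + p.-1 ^ p)%N by rewrite subnK.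
split => //.
- rewrite /m; case: p pp op p2 {le1 e m} => // q pp _ q2 /=.
  have h1 : (q ^ q.+1 <= q * q.+1 ^ q)%N.
    by rewrite expnS leq_mul // leq_exp2r // ltnW.
  have h2 : (q.+1 ^ q.+1 = q * q.+1 ^ q + q.+1 ^ q)%N by rewrite expnS mulSnr.
  have h3 : (q.+1 ^ q <= q.+1 ^ q.+1 - q ^ q.+1)%N.
    rewrite h2; apply: leq_trans (leq_sub2l _ h1); by rewrite addKn.
  apply: leq_trans h3.
  have : (q.+1 ^ 1 < q.+1 ^ q)%N by rewrite ltn_exp2l ?(ltnW q2).
  by rewrite expn1.
- rewrite coprime_sym prime_coprime //; apply/negP => hd.
  have : (p %| p.-1 ^ p)%N.
    by rewrite -(dvdn_addr _ hd) -e dvdn_exp // prime_gt0.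
  rewrite Euclid_dvdX // => /andP [hd2 _].
  case: p pp p2 {op le1 e m hd} hd2 => // q pp q2 /= hd2.
  have q0 : (0 < q)%N by case: q q2 {pp hd2}.
  by have := dvdn_leq q0 hd2; rewrite ltnn.
Qed.

Lemma witness (p : nat) : prime p -> odd p ->
  exists (T : finGroupType) (x y : T),
    (x ^+ p)%g <> 1%g /\ (y ^+ p)%g = 1%g /\
    (x * ((((x ^+ p)^-1 * y^-1) * x ^+ p) * y))%g = 1%g.
Proof.
move=> pp op; have /= [pm cop e] := m_facts p pp op.
move: (p ^ p - p.-1 ^ p)%N pm cop e => m pm cop e.
have m1 : (1 < m)%N by apply: leq_trans _ pm; rewrite ltnS prime_gt0.
have pu : (p%:R : 'Z_m) \is a GRing.unit by rewrite unitZpE.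
pose w : 'Z_m := p.-1%:R / p%:R.
have wp : w ^+ p = 1.
  rewrite /w exprMn exprVn -!natrX.
  have -> : ((p.-1 ^ p)%:R : 'Z_m) = (p ^ p)%:R.
    by rewrite e natrD -(Zp_nat_mod m1 m) modnn add0r.
  by rewrite mulrV // natrX unitrX.
have wu : w \is a GRing.unit by rewrite -(unitrX_pos _ (prime_gt0 pp)) wp unitr1.
have injx : injective (fun v : 'Z_m => v + 1) by apply: addIr.
have injy : injective (fun v : 'Z_m => w * v) by apply: mulrI.
exists {perm 'Z_m}.
exists (perm injx), (perm injy).
set x := perm injx; set y := perm injy.
have xpow n v : (x ^+ n)%g v = v + n%:R.
  elim: n v => [|n IH] v; first by rewrite expg0 perm1 addr0.
  by rewrite expgSr permM IH permE -addrA natr1.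
have ypow n v : (y ^+ n)%g v = w ^+ n * v.
  elim: n v => [|n IH] v; first by rewrite expg0 perm1 expr0 mul1r.
  by rewrite expgSr permM IH permE mulrA -exprS.
split; [|split].
- move=> h; have := congr1 (fun s : {perm 'Z_m} => s 0) h.
  rewrite /= xpow perm1 add0r => /(congr1 (@nat_of_ord _)).
  rewrite val_Zp_nat // modn_small //= => p0.
  by move: (prime_gt0 pp); rewrite p0.
- by apply/permP => v; rewrite ypow wp mul1r perm1.
- have H : (x ^+ p * y * x = y * x ^+ p)%g.
    apply/permP => v; rewrite !permM !permE xpow mulrDr.
    rewrite divrK // -addrA natr1 prednK ?prime_gt0 //.
  have E : (x ^- p * y^-1 * x ^+ p * y * x = 1)%g.
    by rewrite -!mulgA (mulgA _ y x) H !mulgA mulgKV mulVg.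
  have -> : (x ^- p * y^-1 * x ^+ p * y = x^-1)%g.
    by rewrite -[LHS](mulgK x) E mul1g.
  exact: mulgV.
Qed.


Lemma witness_rec (p : nat) : prime p -> odd p ->
  exists (H : Defs.group) (x y : H), gpow x p <> gone H /\ gpow y p = gone H /\
    gmul x (gcomm (gpow x p) y) = gone H.
Proof.
move=> pp op; have [T [x [y [h1 [h2 h3]]]]] := witness p pp op.
exists (PG T), x, y; rewrite !gpowE; split => //.
Qed.
End W.

Theorem mainTheorem11 (p : nat) (hp : prime p) (hodd : odd p)
  (G : group) (a b : G) (HG : presents2 a b [:: rel_G1 p; rel_b p])
  (Q : group) (al be : Q) (HQ : presents2 al be [:: rel_a p; rel_b p]) :
  gpow a p <> gone G /\
  (exists phi : G -> Q, is_hom phi /\ phi a = al /\ phi b = be) /\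
  (forall phi : G -> Q, is_hom phi -> phi a = al -> phi b = be ->
     exists g : G, g <> gone G /\ phi g = gone Q) /\
  ~ residually_nilpotent G.
Proof.
have P1 : gpow a p <> gone G.
  move=> h; have [H [x [y [hx [hy hr]]]]] := W.witness_rec p hp hodd.
  have [f [fh [fa [fb _]]]] : exists f : G -> H, is_hom f /\ f a = x /\ f b = y /\
      forall g : G -> H, is_hom g -> g a = x -> g b = y -> forall z, g z = f z.
    apply: HG.2 => r /= [<-|[<-|[]]] /=; first by rewrite /rel_G1 hr gpow_one.
    exact: hy.
  apply: hx; by rewrite -fa -(hom_pow f a p fh) h (hom_one f fh).
have alp : gpow al p = gone Q by exact: (HQ.1 (rel_a p) (or_introl erefl)).
have bep : gpow be p = gone Q by exact: (HQ.1 (rel_b p) (or_intror (or_introl erefl))).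
split => //; split; [|split].
- have [f [fh [fa [fb _]]]] : exists f : G -> Q, is_hom f /\ f a = al /\ f b = be /\
      forall g : G -> Q, is_hom g -> g a = al -> g b = be -> forall z, g z = f z.
    apply: HG.2 => r /= [<-|[<-|[]]] /=; last exact: bep.
    rewrite /rel_G1 alp /gcomm; gsimp; exact: alp.
  by exists f.
- move=> phi hphi pa pb; exists (gpow a p); split => //.
  by rewrite (hom_pow phi a p hphi) pa.
- move=> RN; apply: P1; apply: RN; apply: (all_gamma a b p).
  exact: (HG.1 (rel_G1 p) (or_introl erefl)).
Qed.
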